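(* Let $\alpha\in\{0,1\}$ and $u\geqslant1$ be integers. There exists a set $\mathfrak{A}$ of $u$ integer $3\times3$ matrices such that the multiset of absolute values of all entries of all matrices in $\mathfrak{A}$ is exactly the set $$\begin{aligned}&[4\alpha+9,2u+4\alpha+7]_2\cup[2u+4\alpha+8,3u+4\alpha+7]\cup[3u+8\alpha+16,5u+8\alpha+15]\cup[5u+12\alpha+24,6u+12\alpha+23]\\ &\cup[6u+12\alpha+25,8u+12\alpha+23]_2\cup[9u+16\alpha+32,10u+16\alpha+31]\cup[11u+20\alpha+40,12u+20\alpha+39]\\&\cup[14u+28\alpha+56,16u+28\alpha+54]_2\end{aligned}$$ (each element occurring once), and $\sigma_r(A)=\sigma_c(A)=(0,0,0)$ for every $A\in\mathfrak{A}$.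
   Context: For integers $a\equiv b\pmod d$ with $d\geqslant1$, $[a,b]_d=\{a+id: 0\leqslant i\leqslant (b-a)/d\}$ if $a\leqslant b$ and $[a,b]_d=\varnothing$ if $a>b$; $[a,b]=[a,b]_1$. For a matrix $A$, $\sigma_r(A)$ is the sequence of its row sums and $\sigma_c(A)$ the sequence of its column sums. *)

(* Defs.v *)
From mathcomp Require Import all_boot all_order all_algebra.
Set Implicit Arguments. Unset Strict Implicit. Unset Printing Implicit Defensive.
Import GRing.Theory Num.Theory.

(* [a,b]_d = {a + i d : 0 <= i <= (b-a)/d} if a <= b, empty otherwise
   (all endpoints in the statement are positive naturals). *)
Definition step_int (a b d : nat) : seq nat :=
  if a <= b then [seq a + i * d | i <- iota 0 ((b - a) %/ d).+1] else [::].

Definition nat_int (a b : nat) : seq nat := step_int a b 1.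

Definition target (al u : nat) : seq nat :=
  step_int (4*al+9) (2*u+4*al+7) 2
  ++ nat_int (2*u+4*al+8) (3*u+4*al+7)
  ++ nat_int (3*u+8*al+16) (5*u+8*al+15)
  ++ nat_int (5*u+12*al+24) (6*u+12*al+23)
  ++ step_int (6*u+12*al+25) (8*u+12*al+23) 2
  ++ nat_int (9*u+16*al+32) (10*u+16*al+31)
  ++ nat_int (11*u+20*al+40) (12*u+20*al+39)
  ++ step_int (14*u+28*al+56) (16*u+28*al+54) 2.

Definition abs_entries (A : 'M[int]_3) : seq nat :=
  [seq absz (A i j) | i <- enum 'I_3, j <- enum 'I_3].

Definition zero_line_sums (A : 'M[int]_3) : Prop :=
  (forall i : 'I_3, (\sum_(j < 3) A i j)%R = 0%R) /\
  (forall j : 'I_3, (\sum_(i < 3) A i j)%R = 0%R).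

(* Main.v *)
Require Import Defs.
From mathcomp Require Import all_boot all_order all_algebra zify.
Import GRing.Theory.

Section X.
Variables (al u i : nat).
Definition v0 := 4*al+9 + i*2.
Definition v1 := 2*u+4*al+8 + (u.-1 - i)*1.
Definition v7 := 3*u+8*al+16 + i*1.
Definition v2 := 5*u+12*al+24 + i*1.
Definition v4 := 9*u+16*al+32 + i*1.
Definition v6 := 14*u+28*al+56 + i*2.
Definition v8 := 3*u+8*al+16+u + (u.-1 - i)*1.
Definition v3 := 6*u+12*al+25 + i*2.
Definition v5 := 11*u+20*al+40 + i*1.
End X.

Definition rows al u i : seq (seq int) :=
  [:: [:: Posz (v0 al i); Posz (v1 al u i); (- Posz (v7 al u i))%R];
      [:: (- Posz (v2 al u i))%R; (- Posz (v4 al u i))%R; Posz (v6 al u i)];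
      [:: Posz (v8 al u i); Posz (v3 al u i); (- Posz (v5 al u i))%R]].

Definition M al u i : 'M[int]_3 := \matrix_(r < 3, k < 3) nth 0%R (nth [::] (rows al u i) r) k.

Lemma absM al u i : abs_entries (M al u i) =
  [:: v0 al i; v1 al u i; v7 al u i; v2 al u i; v4 al u i; v6 al u i; v8 al u i; v3 al u i; v5 al u i].
Proof.
rewrite /abs_entries.
have -> : enum 'I_3 = [:: ord0; inord 1; inord 2].
  by apply: (inj_map val_inj); rewrite val_enum_ord /= !inordK.
rewrite /abs_entries /= /M !mxE /= !inordK //=.
by rewrite !abszN.
Qed.

Lemma zsM al u i : i < u -> zero_line_sums (M al u i).
Proof.
move=> hi; split=> -[[|[|[|//]]] ?]; rewrite !big_ord_recr big_ord0 /= !mxE /=;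
rewrite /v0 /v1 /v2 /v3 /v4 /v5 /v6 /v7 /v8; lia.
Qed.

Lemma flat_cons (T : eqType) (T' : Type) (x y : T' -> seq T) (fs : seq T') :
  perm_eq (flatten [seq (x f ++ y f) | f <- fs]) (flatten (map x fs) ++ flatten (map y fs)).
Proof.
elim: fs => //= f fs IH.
rewrite -!catA perm_cat2l perm_sym perm_catCA perm_cat2l perm_sym //.
Qed.

Lemma flat_tr (T : eqType) (fs : seq (nat -> T)) (r : seq nat) :
  perm_eq (flatten [seq [seq f i | f <- fs] | i <- r])
          (flatten [seq [seq f i | i <- r] | f <- fs]).
Proof.
elim: r => [|i r IH] /=.
  by elim: fs.
have H : perm_eq (flatten [seq f i :: [seq f j | j <- r] | f <- fs])
  (flatten [seq [:: f i] | f <- fs] ++ flatten [seq [seq f j | j <- r] | f <- fs])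
  := @flat_cons _ _ (fun f => [:: f i]) (fun f => [seq f j | j <- r]) fs.
rewrite perm_sym (perm_trans H) // perm_sym.
rewrite (_ : flatten [seq [:: f i] | f <- fs] = [seq f i | f <- fs]); last by clear; elim: fs => //= f fs ->.
by rewrite perm_cat2l.
Qed.

Lemma step_eq a d n : 0 < d -> 0 < n ->
  step_int a (a + n.-1 * d) d = [seq a + i * d | i <- iota 0 n].
Proof.
move=> hd hn; rewrite /step_int leq_addr addKn mulnK // prednK //.
Qed.

Lemma rev_map_iota (g : nat -> nat) n :
  [seq g (n.-1 - i) | i <- iota 0 n] = rev [seq g i | i <- iota 0 n].
Proof.
apply: (@eq_from_nth _ 0); first by rewrite size_rev !size_map size_iota.
move=> k; rewrite size_map size_iota => hk.
rewrite nth_rev; last by rewrite size_map size_iota.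
rewrite size_map size_iota !(nth_map 0) ?size_iota //; last by lia.
rewrite !nth_iota //; last by lia.
congr g; lia.
Qed.

Theorem lemma2p3 (al u : nat) (hal : al <= 1) (hu : 1 <= u) :
  exists s : seq 'M[int]_3,
    [/\ size s = u, uniq s,
        perm_eq (flatten [seq abs_entries A | A <- s]) (target al u)
      & forall A, A \in s -> zero_line_sums A].
Proof.
exists [seq M al u i | i <- iota 0 u]; split.
- by rewrite size_map size_iota.
- rewrite map_inj_in_uniq ?iota_uniq // => i j _ _ /matrixP /(_ ord0 ord0).
  rewrite !mxE /= /v0 => -[]; lia.
- pose fs := [:: v0 al; v1 al u; v7 al u; v2 al u; v4 al u; v6 al u; v8 al u; v3 al u; v5 al u].
  rewrite -map_comp (eq_map (g := fun i => [seq f i | f <- fs])); last by move=> i; rewrite /= absM.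
  rewrite (permPl (@flat_tr _ fs (iota 0 u))).
  set I := iota 0 u.
  have e1 : step_int (4*al+9) (2*u+4*al+7) 2 = map (v0 al) I.
    by rewrite (_ : 2*u+4*al+7 = 4*al+9 + u.-1*2); [rewrite step_eq|lia].
  have e2 : perm_eq (map (v1 al u) I) (nat_int (2*u+4*al+8) (3*u+4*al+7)).
    rewrite /nat_int (_ : 3*u+4*al+7 = 2*u+4*al+8 + u.-1*1); last by lia.
    by rewrite step_eq // /v1 (rev_map_iota (fun i => 2*u+4*al+8 + i*1)) perm_rev.
  have e3 : perm_eq (map (v7 al u) I ++ map (v8 al u) I) (nat_int (3*u+8*al+16) (5*u+8*al+15)).
    rewrite /nat_int (_ : 5*u+8*al+15 = 3*u+8*al+16 + (u+u).-1*1); last by lia.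
    rewrite step_eq ?addn_gt0 ?hu // iotaD map_cat perm_cat2l /v8.
    rewrite (rev_map_iota (fun i => 3*u+8*al+16+u + i*1)) perm_rev.
    rewrite (_ : iota (0+u) u = map (addn u) (iota 0 u)); last by rewrite -iotaDl addn0.
    rewrite -map_comp (eq_map (g := fun i => 3*u+8*al+16+u + i*1)) ?perm_refl // => i /=; lia.
  have e4 : step_int (5*u+12*al+24) (6*u+12*al+23) 1 = map (v2 al u) I.
    by rewrite (_ : 6*u+12*al+23 = 5*u+12*al+24 + u.-1*1); [rewrite step_eq|lia].
  have e5 : step_int (6*u+12*al+25) (8*u+12*al+23) 2 = map (v3 al u) I.
    by rewrite (_ : 8*u+12*al+23 = 6*u+12*al+25 + u.-1*2); [rewrite step_eq|lia].
  have e6 : step_int (9*u+16*al+32) (10*u+16*al+31) 1 = map (v4 al u) I.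
    by rewrite (_ : 10*u+16*al+31 = 9*u+16*al+32 + u.-1*1); [rewrite step_eq|lia].
  have e7 : step_int (11*u+20*al+40) (12*u+20*al+39) 1 = map (v5 al u) I.
    by rewrite (_ : 12*u+20*al+39 = 11*u+20*al+40 + u.-1*1); [rewrite step_eq|lia].
  have e8 : step_int (14*u+28*al+56) (16*u+28*al+54) 2 = map (v6 al u) I.
    by rewrite (_ : 16*u+28*al+54 = 14*u+28*al+56 + u.-1*2); [rewrite step_eq|lia].
  rewrite /target; apply/permP => p; rewrite !count_cat.
  rewrite -(permP e2 p) -(permP e3 p) /nat_int e1 e4 e5 e6 e7 e8.
  rewrite /fs /= !count_cat. set a0 := count p (map (v0 al) I). set a1 := count p (map (v1 al u) I). set a2 := count p (map (v2 al u) I). set a3 := count p (map (v3 al u) I). set a4 := count p (map (v4 al u) I). set a5 := count p (map (v5 al u) I). set a6 := count p (map (v6 al u) I). set a7 := count p (map (v7 al u) I). set a8 := count p (map (v8 al u) I). clearbody a0 a1 a2 a3 a4 a5 a6 a7 a8; lia.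
- move=> A /mapP [i]; rewrite mem_iota add0n => /andP [_ hi] ->.
  exact: zsM.
Qed.
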